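(* Let $X=\{x_1,\ldots,x_n\}$ be a finite set and $k\ge 2$. For every set of medoids $M\subseteq X$ with $|M|=k$, there exists a dissimilarity $d$ on $X$ such that $M=\operatorname{arg\,max}_{M'}\tilde{S}(X,d,M')$, where $M'$ ranges over all subsets of $X$ of size $k$; that is, $M$ is the unique maximizer of the Average Medoid Silhouette (richness).
   Context: For a dissimilarity $d: X\times X\to\mathbb{R}$ and a set of medoids $M\subseteq X$, let $d_1(i)$ denote the distance from $x_i$ to its closest medoid in $M$ and $d_2(i)$ the distance to its second closest medoid in $M$. The Medoid Silhouette of $x_i$ is $\tilde{s}_i(X,d,M)=1-\frac{d_1(i)}{d_2(i)}$, with the convention $\tilde{s}_i=1$ when $d_1(i)=d_2(i)=0$; the Average Medoid Silhouette is $\tilde{S}(X,d,M)=\frac{1}{n}\sum_{i=1}^n\tilde{s}_i(X,d,M)$. *)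

(* Defs.v *)
From mathcomp Require Import all_boot all_order all_algebra.
From mathcomp Require Import reals.
Set Implicit Arguments. Unset Strict Implicit. Unset Printing Implicit Defensive.
Import Order.TTheory GRing.Theory Num.Theory.
Local Open Scope ring_scope.

Section MedoidSilhouette.
Variables (R : realType) (T : finType).

Definition dissimilarity (d : T -> T -> R) : Prop :=
  [/\ forall x y, 0 <= d x y, forall x y, d x y = d y x & forall x, d x x = 0].

Definition medoid_dists (d : T -> T -> R) (M : {set T}) (x : T) : seq R :=
  sort <=%R [seq d x m | m <- enum M].

Definition d1 d M x : R := nth 0 (medoid_dists d M x) 0.
Definition d2 d M x : R := nth 0 (medoid_dists d M x) 1.

Definition medoid_silhouette d M x : R :=
  if (d1 d M x == 0) && (d2 d M x == 0) then 1 else 1 - d1 d M x / d2 d M x.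

Definition avg_medoid_silhouette d M : R :=
  #|T|%:R^-1 * \sum_(x : T) medoid_silhouette d M x.

End MedoidSilhouette.

(* Main.v *)
Require Import Defs.
From mathcomp Require Import all_boot all_order all_algebra.
From mathcomp Require Import reals.
From mathcomp Require Import lra.
Import Order.TTheory GRing.Theory Num.Theory.
Local Open Scope ring_scope.

Section Gen.
Variables (R : realType) (T : finType).
Implicit Types (d : T -> T -> R) (A : {set T}) (x : T).

Lemma md_sorted d A x : sorted <=%R (medoid_dists d A x).
Proof. exact: (sort_sorted (@le_total _ R)). Qed.

Lemma md_mem d A x y : y \in medoid_dists d A x -> exists2 m, m \in A & y = d x m.
Proof. by rewrite mem_sort => /mapP [m]; rewrite mem_enum => Hm ->; exists m. Qed.

Lemma md_memI d A x m : m \in A -> d x m \in medoid_dists d A x.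
Proof. by move=> Hm; rewrite mem_sort; apply: map_f; rewrite mem_enum. Qed.

Lemma md_size d A x : size (medoid_dists d A x) = #|A|.
Proof. by rewrite size_sort size_map cardE. Qed.

Lemma d1_le d A x y : y \in medoid_dists d A x -> d1 d A x <= y.
Proof.
rewrite /d1; move: (md_sorted d A x); case: (medoid_dists d A x) => [//|h t] /= Hs.
rewrite inE => /orP [/eqP->//|Hy].
by have /allP := order_path_min le_trans Hs; apply.
Qed.

Lemma d1_mem d A x : (0 < #|A|)%N -> d1 d A x \in medoid_dists d A x.
Proof. by move=> H; apply: mem_nth; rewrite md_size. Qed.

Lemma d2_mem d A x : (1 < #|A|)%N -> d2 d A x \in medoid_dists d A x.
Proof. by move=> H; apply: mem_nth; rewrite md_size. Qed.

Lemma d2_ge d A x b : (1 < #|A|)%N ->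
  (count (fun m => (d x m < b)%R) (enum A) <= 1)%N -> b <= d2 d A x.
Proof.
move=> HA Hc; rewrite leNgt; apply/negP => Hlt.
have : (count (fun y => (y < b)%R) (medoid_dists d A x) <= 1)%N.
  by rewrite count_sort count_map.
move: (md_sorted d A x) Hlt (md_size d A x) HA.
rewrite /d2; case: (medoid_dists d A x) => [|h [|h' t]] /= Hs Hlt Hsz HA'.
- by rewrite -Hsz in HA'.
- by rewrite -Hsz in HA'.
move/andP: Hs => [Hhh _].
by rewrite Hlt (le_lt_trans Hhh Hlt).
Qed.

Lemma sil_medoid d A x : (forall m, m \in A -> 0 <= d x m) -> x \in A ->
  d x x = 0 -> medoid_silhouette d A x = 1.
Proof.
move=> Hpos HxA Hxx.
have H0 : d1 d A x = 0.
  apply/eqP; rewrite eq_le; apply/andP; split.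
    by rewrite -Hxx; apply: d1_le; apply: md_memI.
  have [m Hm ->] := md_mem _ _ _ _ (d1_mem d A x (introT card_gt0P (ex_intro _ x HxA))).
  exact: Hpos.
rewrite /medoid_silhouette H0 eqxx /=; case: ifP => // _.
by rewrite mul0r subr0.
Qed.

Lemma sil_le d A x lo hi : (1 < #|A|)%N -> 0 < lo ->
  (forall m, m \in A -> lo <= d x m <= hi) ->
  medoid_silhouette d A x <= 1 - lo / hi.
Proof.
move=> HA Hlo Hb.
have HA0 : (0 < #|A|)%N by apply: ltn_trans HA.
have [m1 Hm1 E1] := md_mem _ _ _ _ (d1_mem d A x HA0).
have [m2 Hm2 E2] := md_mem _ _ _ _ (d2_mem d A x HA).
have /andP [l1 h1] := Hb _ Hm1; have /andP [l2 h2] := Hb _ Hm2.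
rewrite -E1 in l1 h1; rewrite -E2 in l2 h2.
have Hd1 : d1 d A x != 0 by rewrite gt_eqF // (lt_le_trans Hlo l1).
rewrite /medoid_silhouette (negbTE Hd1) /=.
rewrite lerD2l lerN2.
have Hd2 : 0 < d2 d A x by apply: lt_le_trans l2.
have Hhi : 0 < hi by apply: lt_le_trans h2.
apply: (@le_trans _ _ (lo / d2 d A x)).
  by apply: ler_pM => //; [exact: ltW | rewrite invr_ge0 ltW | rewrite lef_pV2].
by apply: ler_pM => //; [exact: ltW | rewrite invr_ge0 ltW].
Qed.

Lemma sil_ge d A x lo a b m0 : (1 < #|A|)%N -> 0 < lo -> 0 < b ->
  (forall m, m \in A -> lo <= d x m) -> m0 \in A -> d x m0 <= a ->
  (count (fun m => (d x m < b)%R) (enum A) <= 1)%N ->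
  1 - a / b <= medoid_silhouette d A x.
Proof.
move=> HA Hlo Hb Hl Hm0 Ha Hc.
have HA0 : (0 < #|A|)%N by apply: ltn_trans HA.
have [m1 Hm1 E1] := md_mem _ _ _ _ (d1_mem d A x HA0).
have l1 := Hl _ Hm1; rewrite -E1 in l1.
have u1 : d1 d A x <= a by apply: le_trans (d1_le _ _ _ _ (md_memI d A x m0 Hm0)) Ha.
have l2 := d2_ge d A x b HA Hc.
have Hd1 : d1 d A x != 0 by rewrite gt_eqF // (lt_le_trans Hlo l1).
rewrite /medoid_silhouette (negbTE Hd1) /=.
rewrite lerD2l lerN2.
have Hd2 : 0 < d2 d A x by apply: lt_le_trans l2.
apply: (@le_trans _ _ (a / d2 d A x)).
  by apply: ler_pM => //; [exact: ltW (lt_le_trans Hlo l1) | rewrite invr_ge0 ltW].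
apply: ler_pM => //.
- apply: le_trans (ltW (lt_le_trans Hlo l1)) u1.
- by rewrite invr_ge0 ltW.
- by rewrite lef_pV2 // posrE.
Qed.

Lemma sil_le1 d A x : (forall m, m \in A -> 0 <= d x m) -> medoid_silhouette d A x <= 1.
Proof.
move=> Hpos; rewrite /medoid_silhouette; case: ifP => // _.
rewrite lerBlDr lerDl.
case: (posnP #|A|) => [H0|HA0].
  by rewrite /d1 /d2; move: (md_size d A x); rewrite H0; case: (medoid_dists d A x) => [|? ?] //= _; rewrite mul0r.
apply: divr_ge0.
  by have [m Hm ->] := md_mem _ _ _ _ (d1_mem d A x HA0); apply: Hpos.
case: (ltnP 1 #|A|) => HA.
  by have [m Hm ->] := md_mem _ _ _ _ (d2_mem d A x HA); apply: Hpos.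
by rewrite /d2 nth_default // md_size.
Qed.

End Gen.
Section Main.
Variables (R : realType) (T : finType) (M : {set T}) (m0 : T).
Hypothesis Hm0 : m0 \in M.

Definition dd (x y : T) : R :=
  if x == y then 0
  else if ((x == m0) && (y \notin M)) || ((y == m0) && (x \notin M)) then 1/4
  else if ((x == m0) && (y \in M)) || ((y == m0) && (x \in M)) then 1/2
  else 1.

Lemma dd_diss : dissimilarity dd.
Proof.
split.
- move=> x y; rewrite /dd; repeat case: ifP => _; lra.
- move=> x y; rewrite /dd eq_sym; congr (if _ then _ else _).
  by rewrite orbC; congr (if _ then _ else _); rewrite orbC.
- by move=> x; rewrite /dd eqxx.
Qed.

Lemma dd_ge0 x y : 0 <= dd x y.
Proof. by case: dd_diss => H _ _; apply: H. Qed.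

Lemma dd_bounds x y : x != y -> 1/4 <= dd x y <= 1.
Proof. move=> H; rewrite /dd (negbTE H); repeat case: ifP => _; apply/andP; split; lra. Qed.

Lemma dd_nonM_m0 x : x \notin M -> dd x m0 = 1/4.
Proof.
move=> Hx; have Hne : x != m0 by apply: contraNneq Hx => ->.
by rewrite /dd (negbTE Hne) eqxx Hx orbT.
Qed.

Lemma dd_nonM_m x m : x \notin M -> m \in M -> m != m0 -> dd x m = 1.
Proof.
move=> Hx Hm Hne; have Hxm0 : x != m0 by apply: contraNneq Hx => ->.
have Hxm : x != m by apply: contraNneq Hx => ->.
by rewrite /dd (negbTE Hxm) (negbTE Hxm0) (negbTE Hne) /=.
Qed.

Lemma dd_M_x x m : x \in M -> x != m0 -> x != m -> 1/2 <= dd x m <= 1.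
Proof.
move=> Hx Hxm0 Hxm; rewrite /dd (negbTE Hxm) (negbTE Hxm0) Hx /=.
by case: (m == m0) => /=; apply/andP; split; lra.
Qed.

Lemma dd_m0_x m : m != m0 -> 1/4 <= dd m0 m <= 1/2.
Proof.
move=> Hm; rewrite /dd eq_sym (negbTE Hm) eqxx /=.
by case: (m \in M) => /=; apply/andP; split; lra.
Qed.

End Main.
Lemma sumH (R : realType) (T : finType) (A : {set T}) :
  \sum_(x : T) (if x \in A then 1 else 3/4 : R) = #|T|%:R * (3/4) + #|A|%:R / 4.
Proof.
transitivity (\sum_(x : T) (3/4 + (if x \in A then 1 else 0) / 4 : R)).
  by apply: eq_bigr => x _; case: (x \in A); lra.
rewrite big_split /= sumr_const -mulr_natr -mulr_suml -big_mkcond /= sumr_const.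
by rewrite mulr_natl.
Qed.

Theorem theorem3 (R : realType) (T : finType) (k : nat) (M : {set T}) :
  (2 <= k)%N -> #|M| = k ->
  exists d : T -> T -> R,
    dissimilarity d /\
    forall M' : {set T}, #|M'| = k -> M' != M ->
      avg_medoid_silhouette d M' < avg_medoid_silhouette d M.
Proof.
move=> Hk HM.
have [m0 Hm0] : exists m0, m0 \in M.
  by apply/card_gt0P; rewrite HM; apply: leq_trans Hk.
exists (dd R T M m0); split; first exact: dd_diss.
move=> M' HM' Hne.
set d := dd R T M m0.
have HM'1 : (1 < #|M'|)%N by rewrite HM'.
have HM1 : (1 < #|M|)%N by rewrite HM.
have Hpos : forall x m, m \in M' -> 0 <= d x m by move=> x m _; apply: dd_ge0.
have Hg : forall x, x \notin M' -> medoid_silhouette d M' x <= 3/4.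
  move=> x Hx.
  have := sil_le _ _ d M' x (1/4) 1 HM'1 ltac:(lra).
  have H : forall m, m \in M' -> 1/4 <= d x m <= 1.
    move=> m Hm; apply: dd_bounds; by apply: contraNneq Hx => ->.
  move/(_ H); lra.
have [x0 Hx0 Hgx0] : exists2 x0, x0 \notin M' & medoid_silhouette d M' x0 <= 1/2.
  case: (boolP (m0 \in M')) => Hm0'.
    have : ~~ (M \subset M').
      apply/negP => Hs; move/negP: Hne; apply; apply/eqP/setP => y.
      by move/(subset_cardP (etrans HM (esym HM'))): Hs => ->.
    case/subsetPn => x Hx Hx'; exists x => //.
    have Hxm0 : x != m0 by apply: contraNneq Hx' => ->.
    have := sil_le _ _ d M' x (1/2) 1 HM'1 ltac:(lra).
    have H : forall m, m \in M' -> 1/2 <= d x m <= 1.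
      move=> m Hm; apply: dd_M_x => //; by apply: contraNneq Hx' => ->.
    move/(_ H); lra.
  exists m0 => //.
  have := sil_le _ _ d M' m0 (1/4) (1/2) HM'1 ltac:(lra).
  have H : forall m, m \in M' -> 1/4 <= d m0 m <= 1/2.
    move=> m Hm; apply: dd_m0_x; by apply: contraNneq Hm0' => <-.
  move/(_ H); lra.
have Hf : forall x, (if x \in M then 1 else 3/4) <= medoid_silhouette d M x.
  move=> x; case: ifP => Hx.
    by rewrite sil_medoid // => [m _|]; [apply: dd_ge0 | rewrite /d /dd eqxx].
  have Hx' : x \notin M by rewrite Hx.
  have := sil_ge _ _ d M x (1/4) (1/4) 1 m0 HM1 ltac:(lra) ltac:(lra).
  have H : forall m, m \in M -> 1/4 <= d x m.
    move=> m Hm; have Hxm : x != m by apply: contraNneq Hx' => ->.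
    by case/andP: (dd_bounds R T M m0 x m Hxm).
  move/(_ H Hm0).
  have -> : d x m0 = 1/4 by rewrite /d dd_nonM_m0.
  move/(_ (lexx _)).
  have Hc : (count (fun m => (d x m < 1)%R) (enum M) <= 1)%N.
    rewrite (@eq_in_count _ _ (pred1 m0)).
      by rewrite (count_uniq_mem m0 (enum_uniq (mem M))) leq_b1.
    move=> m; rewrite mem_enum => Hm /=; case: (eqVneq m m0) => [->|Hne0].
      rewrite /d dd_nonM_m0 //; lra.
    by rewrite /d dd_nonM_m // ltxx.
  move/(_ Hc); lra.
have Lg : \sum_(x : T) medoid_silhouette d M' x <=
          \sum_(x : T) (if x \in M' then 1 else 3/4 : R) - 1/4.
  rewrite (bigD1 x0) //= [X in _ <= X - _](bigD1 x0) //= (negbTE Hx0).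
  have : \sum_(i | i != x0) medoid_silhouette d M' i <=
         \sum_(i | i != x0) (if i \in M' then 1 else 3/4 : R).
    apply: ler_sum => i _; case: ifP => Hi.
      by apply: sil_le1 => m _; apply: dd_ge0.
    by apply: Hg; rewrite Hi.
  lra.
have Lf : \sum_(x : T) (if x \in M then 1 else 3/4 : R) <=
          \sum_(x : T) medoid_silhouette d M x.
  by apply: ler_sum => x _; apply: Hf.
rewrite !sumH HM' HM in Lg Lf.
rewrite /avg_medoid_silhouette ltr_pM2l; first lra.
rewrite invr_gt0 ltr0n; apply/card_gt0P; by exists m0.
Qed.
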